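(* Assume all thermal noise is zero ($\mathbf N_T=\mathbf 0$, $\mathbf N_D=\mathbf 0$). If the jammer is not eclipsed (in the sense of eclipsing with channel estimation defined in the context), then every minimizer $(\hat{\mathbf P},\hat{\mathbf H},\hat{\mathbf S}_D)$ of $$\min_{\tilde{\mathbf P}\in\mathscr G_{B-I}(\mathbb C^B),\ \tilde{\mathbf H}\in\mathbb C^{B\times U},\ \tilde{\mathbf S}_D\in\mathcal S^{U\times D}}\ \big\|\tilde{\mathbf P}\big([\mathbf Y_T,\mathbf Y_D]-\tilde{\mathbf H}[\mathbf S_T,\tilde{\mathbf S}_D]\big)\big\|_F^2$$ satisfies $\hat{\mathbf P}=\mathbf I_B-\mathbf J\mathbf J^\dagger$, $\hat{\mathbf P}\hat{\mathbf H}=\hat{\mathbf P}\mathbf H$, and $\hat{\mathbf S}_D=\mathbf S_D$ (and such minimizers exist).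
   Context: Let $B,U,I,T,D$ be positive integers with $B\ge U+I$ and $T\ge U$. Let $\mathcal S=\{(\pm1\pm i)/\sqrt2\}\subset\mathbb C$ (QPSK). Let $\mathbf H\in\mathbb C^{B\times U}$, $\mathbf J\in\mathbb C^{B\times I}$ with $[\mathbf H,\mathbf J]$ of full column rank $U+I$. Let $\mathbf S_T\in\mathbb C^{U\times T}$ be a pilot matrix of full row rank $U$, $\mathbf S_D\in\mathcal S^{U\times D}$, $\mathbf W_T\in\mathbb C^{I\times T}$, $\mathbf W_D\in\mathbb C^{I\times D}$, noise $\mathbf N_T,\mathbf N_D$, and $\mathbf Y_T=\mathbf H\mathbf S_T+\mathbf J\mathbf W_T+\mathbf N_T$, $\mathbf Y_D=\mathbf H\mathbf S_D+\mathbf J\mathbf W_D+\mathbf N_D$; $[\mathbf A,\mathbf B]$ is horizontal concatenation. $\mathbf A^\dagger$ is the Moore–Penrose pseudoinverse. $\mathscr G_{B-I}(\mathbb C^B)$ denotes the set of $B\times B$ orthogonal projections onto $(B-I)$-dimensional subspaces of $\mathbb C^B$. Eclipsing with channel estimation: the jammer is eclipsed if there exists $\tilde{\mathbf S}_D\in\mathcal S^{U\times D}\setminus\{\mathbf S_D\}$ such that $\begin{bmatrix}\mathbf S_D-\tilde{\mathbf S}_D\\ \mathbf W_D-\mathbf W_T\mathbf S_T^\dagger\tilde{\mathbf S}_D\end{bmatrix}$ has rank at most $I$. *)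

(* Defs.v *)
From HB Require Import structures.
From Stdlib Require Import ClassicalEpsilon.
From mathcomp Require Import all_boot all_order all_algebra.
From mathcomp Require Import complex.
From mathcomp Require Import reals.
Set Implicit Arguments. Unset Strict Implicit. Unset Printing Implicit Defensive.
Import Order.TTheory GRing.Theory Num.Theory.
Local Open Scope ring_scope.

Definition ctmx (C : numClosedFieldType) m n (A : 'M[C]_(m, n)) : 'M[C]_(n, m) :=
  map_mx Num.conj A^T.

Definition penrose (C : numClosedFieldType) m n (A : 'M[C]_(m, n)) (X : 'M[C]_(n, m)) : Prop :=
  [/\ A *m X *m A = A, X *m A *m X = X,
      ctmx (A *m X) = A *m X & ctmx (X *m A) = X *m A].

(* Moore--Penrose pseudoinverse: the (unique, always existing) matrix
   satisfying the Penrose conditions, picked by Hilbert's epsilon. *)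
Definition pinv (C : numClosedFieldType) m n (A : 'M[C]_(m, n)) : 'M[C]_(n, m) :=
  epsilon (inhabits 0) (penrose A).

Definition frob2 (C : numClosedFieldType) m n (A : 'M[C]_(m, n)) : C :=
  \sum_(i < m) \sum_(j < n) `|A i j| ^+ 2.

Definition qpsk (C : numClosedFieldType) (x : C) : Prop :=
  exists a b : C, (a = 1 \/ a = -1) /\ (b = 1 \/ b = -1) /\
                  x = (a + 'i * b) / sqrtC 2.

Definition qpsk_mx (C : numClosedFieldType) m n (S : 'M[C]_(m, n)) : Prop :=
  forall i j, qpsk (S i j).

(* G_k(C^B): orthogonal projections onto k-dimensional subspaces of C^B *)
Definition grass_proj (C : numClosedFieldType) (B k : nat) (P : 'M[C]_B) : Prop :=
  [/\ P *m P = P, ctmx P = P & \rank P = k].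

Definition eclipsed (C : numClosedFieldType) (U I T D : nat)
    (S_T : 'M[C]_(U, T)) (S_D : 'M[C]_(U, D))
    (W_T : 'M[C]_(I, T)) (W_D : 'M[C]_(I, D)) : Prop :=
  exists tS : 'M[C]_(U, D), qpsk_mx tS /\ tS <> S_D /\
    (\rank (col_mx (S_D - tS) (W_D - W_T *m pinv S_T *m tS)) <= I)%N.

Definition jml_obj (C : numClosedFieldType) (B U T D : nat)
    (Y : 'M[C]_(B, T + D)) (S_T : 'M[C]_(U, T))
    (P : 'M[C]_B) (H : 'M[C]_(B, U)) (S : 'M[C]_(U, D)) : C :=
  frob2 (P *m (Y - H *m row_mx S_T S)).

Definition jml_minimizer (C : numClosedFieldType) (B U I T D : nat)
    (Y : 'M[C]_(B, T + D)) (S_T : 'M[C]_(U, T))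
    (P : 'M[C]_B) (H : 'M[C]_(B, U)) (S : 'M[C]_(U, D)) : Prop :=
  [/\ grass_proj (B - I) P, qpsk_mx S &
      forall (P' : 'M[C]_B) (H' : 'M[C]_(B, U)) (S' : 'M[C]_(U, D)),
        grass_proj (B - I) P' -> qpsk_mx S' ->
        jml_obj Y S_T P H S <= jml_obj Y S_T P' H' S'].

(* Main.v *)
Require Import Defs.
From HB Require Import structures.
From Stdlib Require Import ClassicalEpsilon.
From mathcomp Require Import all_boot all_order all_algebra.
From mathcomp Require Import complex.
From mathcomp Require Import reals.
Set Implicit Arguments. Unset Strict Implicit. Unset Printing Implicit Defensive.
Import Order.TTheory GRing.Theory Num.Theory.
Local Open Scope ring_scope.

Section Aux.
Variable C : numClosedFieldType.

Lemma ctmxK m n (A : 'M[C]_(m, n)) : ctmx (ctmx A) = A.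
Proof. by apply/matrixP => i j; rewrite !mxE conjCK. Qed.

Lemma ctmx_mul m n p (A : 'M[C]_(m, n)) (B : 'M[C]_(n, p)) :
  ctmx (A *m B) = ctmx B *m ctmx A.
Proof. by rewrite /ctmx trmx_mul map_mxM. Qed.

Lemma ctmxB m n (A B : 'M[C]_(m, n)) : ctmx (A - B) = ctmx A - ctmx B.
Proof. by apply/matrixP => i j; rewrite !mxE rmorphB. Qed.

Lemma ctmx1 n : ctmx (1%:M : 'M[C]_n) = 1%:M.
Proof. by rewrite /ctmx trmx1 map_mx1. Qed.

Lemma ctmx0 m n : ctmx (0 : 'M[C]_(m, n)) = 0.
Proof. by apply/matrixP => i j; rewrite !mxE rmorph0. Qed.

Lemma ctmx_inv n (A : 'M[C]_n) : ctmx (invmx A) = invmx (ctmx A).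
Proof. by rewrite /ctmx trmx_inv map_invmx. Qed.

Lemma rank_ctmx m n (A : 'M[C]_(m, n)) : \rank (ctmx A) = \rank A.
Proof. by rewrite /ctmx mxrank_map mxrank_tr. Qed.

Lemma mul_ctmx_eq0 m n (X : 'M[C]_(m, n)) : X *m ctmx X = 0 -> X = 0.
Proof.
move=> h; apply/matrixP => i j.
have /matrixP/(_ i i) := h; rewrite !mxE => /eqP.
under eq_bigr => k _ do rewrite !mxE.
move/eqP/psumr_eq0P => H0.
have := H0 (fun k _ => mul_conjC_ge0 _) j isT.
by rewrite -normCK => /eqP; rewrite sqrf_eq0 normr_eq0 => /eqP.
Qed.

Lemma frob2_ge0 m n (A : 'M[C]_(m, n)) : 0 <= frob2 A.
Proof. by apply: sumr_ge0 => i _; apply: sumr_ge0 => j _; apply: exprn_ge0. Qed.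

Lemma frob2_eq0 m n (A : 'M[C]_(m, n)) : frob2 A = 0 -> A = 0.
Proof.
move/psumr_eq0P => H0; apply/matrixP => i j; rewrite mxE.
have H0' := H0 (fun k _ => sumr_ge0 _ (fun l _ => exprn_ge0 _ (normr_ge0 _))) i isT.
have := @psumr_eq0P _ _ xpredT (fun k => `|A i k| ^+ 2) (fun k _ => exprn_ge0 _ (normr_ge0 _)) H0' j isT.
by move/eqP; rewrite sqrf_eq0 normr_eq0 => /eqP.
Qed.

Lemma frob2_0 m n : frob2 (0 : 'M[C]_(m, n)) = 0.
Proof. by rewrite /frob2 big1 // => i _; rewrite big1 // => j _; rewrite mxE normr0 expr0n. Qed.


Lemma left_inv m n (A : 'M[C]_(m, n)) : \rank A = n -> exists L, L *m A = 1%:M.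
Proof.
move=> rA; have : row_free A^T by rewrite /row_free mxrank_tr rA.
case/row_freeP => Bm hB; exists Bm^T.
by rewrite -[A]trmxK -trmx_mul hB trmx1.
Qed.

Lemma ctmx_ctmx_mul m n p (A : 'M[C]_(m, n)) (B : 'M[C]_(p, n)) :
  ctmx (A *m ctmx B) = B *m ctmx A.
Proof. by rewrite ctmx_mul ctmxK. Qed.

Lemma unit_gram m n (A : 'M[C]_(m, n)) : \rank A = n -> (ctmx A *m A) \in unitmx.
Proof.
move=> rA; case: (left_inv rA) => L hL.
rewrite -row_free_unit -kermx_eq0; apply/eqP.
set N := kermx _; have hN := mulmx_ker (ctmx A *m A); rewrite -/N in hN.
have h1 : N *m ctmx A = 0.
  apply: mul_ctmx_eq0; rewrite ctmx_mul ctmxK.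
  by rewrite mulmxA -(mulmxA N) hN mul0mx.
have h2 : A *m ctmx N = 0 by rewrite -ctmx_ctmx_mul h1 ctmx0.
have h3 : ctmx N = 0 by rewrite -[ctmx N]mul1mx -hL -mulmxA h2 mulmx0.
by rewrite -[N]ctmxK h3 ctmx0.
Qed.

Lemma penrose_col m n (A : 'M[C]_(m, n)) : \rank A = n ->
  penrose A (invmx (ctmx A *m A) *m ctmx A).
Proof.
move=> rA; have uK := unit_gram rA.
set K := ctmx A *m A.
have XA : invmx K *m ctmx A *m A = 1%:M by rewrite -mulmxA mulVmx.
have cK : ctmx K = K by rewrite /K ctmx_mul ctmxK.
split.
- by rewrite -mulmxA XA mulmx1.
- by rewrite XA mul1mx.
- by rewrite ctmx_mul ctmx_mul ctmxK ctmx_inv cK mulmxA.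
- by rewrite XA ctmx1.
Qed.

Lemma penrose_ct m n (A : 'M[C]_(m, n)) X : penrose A X -> penrose (ctmx A) (ctmx X).
Proof.
case=> h1 h2 h3 h4; split.
- by rewrite -[in RHS]h1 !ctmx_mul mulmxA.
- by rewrite -[in RHS]h2 !ctmx_mul mulmxA.
- by rewrite -ctmx_mul h4.
- by rewrite -ctmx_mul h3.
Qed.

Lemma pinv_spec m n (A : 'M[C]_(m, n)) : (exists X, penrose A X) -> penrose A (pinv A).
Proof. by move=> [X hX]; rewrite /pinv; apply: epsilon_spec; exists X. Qed.

Lemma pinv_col m n (A : 'M[C]_(m, n)) : \rank A = n ->
  penrose A (pinv A) /\ pinv A *m A = 1%:M.
Proof.
move=> rA; have hp : penrose A (pinv A) by apply: pinv_spec; eexists; apply: penrose_col.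
split=> //; case: (left_inv rA) => L hL; case: hp => h1 _ _ _.
by rewrite -[pinv A *m A]mul1mx -hL -mulmxA (mulmxA A) h1.
Qed.

Lemma pinv_row m n (A : 'M[C]_(m, n)) : \rank A = m ->
  penrose A (pinv A) /\ A *m pinv A = 1%:M.
Proof.
move=> rA; have rA' : \rank (ctmx A) = m by rewrite rank_ctmx.
have hp : penrose A (pinv A).
  apply: pinv_spec; exists (ctmx (invmx (ctmx (ctmx A) *m ctmx A) *m ctmx (ctmx A))).
  by rewrite -[A in penrose A _]ctmxK; apply: penrose_ct; apply: penrose_col.
split=> //; case: (left_inv rA') => L hL; case: hp => h1 _ _ _.
have hR : A *m ctmx L = 1%:M by rewrite -ctmx_ctmx_mul hL ctmx1.
by rewrite -[A *m pinv A]mulmx1 -hR mulmxA h1.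
Qed.


Lemma sylvester m n p (A : 'M[C]_(m, n)) (B : 'M[C]_(n, p)) :
  (\rank A + \rank B <= n + \rank (A *m B))%N.
Proof.
have := mxrank_Frobenius A 1%:M B.
by rewrite mulmx1 mul1mx mxrank1.
Qed.

Lemma rank_left_inv m n p (A : 'M[C]_(m, n)) (L : 'M[C]_(n, m)) (M : 'M[C]_(n, p)) :
  L *m A = 1%:M -> \rank (A *m M) = \rank M.
Proof.
move=> hL; apply/eqP; rewrite eqn_leq mxrankM_maxr /=.
by rewrite -{1}[M]mul1mx -hL -mulmxA mxrankM_maxr.
Qed.

Lemma qpsk_neq0 (x : C) : qpsk x -> x != 0.
Proof.
case=> a [b [ha [hb ->]]].
rewrite mulf_eq0 invr_eq0 sqrtC_eq0 pnatr_eq0 orbF.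
apply/negP => /eqP h.
have e : ('i * b) ^+ 2 = a ^+ 2.
  have -> : 'i * b = - a by apply/eqP; rewrite -addr_eq0 addrC h.
  by rewrite sqrrN.
have a2 : a ^+ 2 = 1 by case: ha => ->; rewrite ?sqrrN expr1n.
have b2 : b ^+ 2 = 1 by case: hb => ->; rewrite ?sqrrN expr1n.
move: e; rewrite exprMn sqrCi a2 b2 mulr1 => /eqP.
by rewrite eq_sym -subr_eq0 opprK -mulr2n pnatr_eq0.
Qed.

Lemma qpsk_opp (x : C) : qpsk x -> qpsk (- x).
Proof.
case=> a [b [ha [hb ->]]]; exists (- a), (- b); split; last split.
- by case: ha => ->; rewrite ?opprK; [right | left].
- by case: hb => ->; rewrite ?opprK; [right | left].
- by rewrite -mulNr opprD mulrN.
Qed.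


Lemma not_eclipsed_rank U I T D (S_T : 'M[C]_(U, T)) (S_D : 'M[C]_(U, D))
    (W_T : 'M[C]_(I, T)) (W_D : 'M[C]_(I, D)) :
  (0 < U)%N -> (0 < D)%N -> qpsk_mx S_D -> ~ eclipsed S_T S_D W_T W_D ->
  \rank (W_D - W_T *m pinv S_T *m S_D) = I.
Proof.
move=> hU hD hS hne; set G := pinv S_T; set Z := W_D - W_T *m G *m S_D.
apply/eqP; rewrite eqn_leq rank_leq_row /= leqNgt; apply/negP => hlt.
apply: hne.
pose i0 : 'I_U := Ordinal hU; pose j0 : 'I_D := Ordinal hD.
pose c := S_D i0 j0 *+ 2; pose dl : 'M[C]_(U, D) := c *: delta_mx i0 j0.
exists (S_D - dl); split; last split.
- move=> i j; rewrite /dl !mxE.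
  case: (eqVneq i i0) => [->|hi] /=; case: (eqVneq j j0) => [->|hj] /=;
    rewrite ?mulr1 ?mulr0 ?subr0 //.
  by rewrite /c mulr2n opprD addrA subrr add0r; apply: qpsk_opp.
- move/matrixP/(_ i0 j0); rewrite /dl !mxE !eqxx mulr1 /c.
  move/eqP; rewrite -subr_eq0 addrAC subrr add0r oppr_eq0.
  by rewrite -mulr_natr mulf_eq0 pnatr_eq0 orbF; apply/negP/qpsk_neq0.
- have -> : S_D - (S_D - dl) = dl by rewrite opprB addrC subrK.
  have -> : W_D - W_T *m G *m (S_D - dl) = Z + W_T *m G *m dl
    by rewrite mulmxBr opprB addrA addrAC.
  have -> : col_mx dl (Z + W_T *m G *m dl) =
            col_mx 0 1%:M *m Z + col_mx 1%:M (W_T *m G) *m dl.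
    by rewrite !mul_col_mx mul0mx !mul1mx add_col_mx add0r addrC.
  apply: leq_trans (mxrank_add _ _) _.
  have hZ : (\rank Z + 1 <= I)%N by rewrite addn1.
  apply: leq_trans hZ; apply: leq_add; first exact: mxrankM_maxr.
  apply: leq_trans (mxrankM_maxr _ _) _.
  by apply: leq_trans (mxrank_scale _ _) _; rewrite mxrank_delta.
Qed.

End Aux.
Unset Implicit Arguments.
From mathcomp Require Import zify.
Lemma zmod4 (V : zmodType) (x1 x2 x3 x4 : V) : x1 - x2 + (x3 - x4) = x1 + x3 - (x2 + x4).
Proof. by rewrite addrACA opprD. Qed.

Theorem theorem6 (R : realType) (B U I T D : nat)
    (H : 'M[R[i]]_(B, U)) (J : 'M[R[i]]_(B, I))
    (S_T : 'M[R[i]]_(U, T)) (S_D : 'M[R[i]]_(U, D))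
    (W_T : 'M[R[i]]_(I, T)) (W_D : 'M[R[i]]_(I, D)) :
  (0 < B)%N -> (0 < U)%N -> (0 < I)%N -> (0 < T)%N -> (0 < D)%N ->
  (U + I <= B)%N -> (U <= T)%N ->
  \rank (row_mx H J) = (U + I)%N ->
  \rank S_T = U ->
  qpsk_mx S_D ->
  ~ eclipsed S_T S_D W_T W_D ->
  let Y := row_mx (H *m S_T + J *m W_T) (H *m S_D + J *m W_D) in
  (exists (P : 'M[R[i]]_B) (Hh : 'M[R[i]]_(B, U)) (Sh : 'M[R[i]]_(U, D)),
      jml_minimizer I Y S_T P Hh Sh) /\
  (forall (P : 'M[R[i]]_B) (Hh : 'M[R[i]]_(B, U)) (Sh : 'M[R[i]]_(U, D)),
      jml_minimizer I Y S_T P Hh Sh ->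
      [/\ P = 1%:M - J *m pinv J, P *m Hh = P *m H & Sh = S_D]).
Proof.
move=> hB hU hI hT hD hUI hUT rK rST hS hne Y.
set K := row_mx H J.
have rJ : \rank J = I.
  apply/eqP; rewrite eqn_leq rank_leq_col /=.
  have e : K = H *m row_mx 1%:M 0 + J *m row_mx 0 1%:M.
    by rewrite !mul_mx_row !mulmx1 !mulmx0 add_row_mx addr0 add0r.
  have := mxrank_add (H *m row_mx 1%:M 0) (J *m row_mx 0 1%:M).
  rewrite -e rK => h.
  have h1 := mxrankM_maxl H (row_mx 1%:M 0 : 'M_(U, U + I)).
  have h2 := mxrankM_maxl J (row_mx 0 1%:M : 'M_(I, U + I)).
  have h3 := rank_leq_col H.
  by have := leq_trans h (leq_add (leq_trans h1 h3) h2); rewrite leq_add2l.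
set Jp := pinv J; have [[hJ1 hJ2 hJ3 hJ4] hJp] := pinv_col rJ.
set G := pinv S_T; have [_ hG] := pinv_row rST.
have [L hL] := left_inv rK.
set P0 : 'M[R[i]]_B := 1%:M - J *m Jp.
have P0J : P0 *m J = 0 by rewrite /P0 mulmxBl mul1mx -mulmxA hJp mulmx1 subrr.
have rJJp : \rank (J *m Jp) = I.
  apply/eqP; rewrite eqn_leq; apply/andP; split.
    by apply: leq_trans (mxrankM_maxl _ _) _; rewrite rJ.
  by have := mxrankM_maxl (J *m Jp) J; rewrite hJ1 rJ.
have gP0 : grass_proj (B - I) P0.
  split.
  - by rewrite {2}/P0 mulmxBr mulmx1 mulmxA P0J mul0mx subr0.
  - by rewrite /P0 ctmxB ctmx1 hJ3.
  - have s1 := sylvester P0 (J *m Jp).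
    rewrite mulmxA P0J mul0mx mxrank0 rJJp addn0 in s1.
    have s2 := mxrank_add P0 (J *m Jp).
    rewrite /P0 subrK mxrank1 -/P0 rJJp in s2.
    have e : (\rank P0 + I)%N = B by apply/eqP; rewrite eqn_leq s1 s2.
    by rewrite -[in RHS]e addnK.
have obj0 : jml_obj Y S_T P0 H S_D = 0.
  rewrite /jml_obj.
  have -> : Y - H *m row_mx S_T S_D = J *m row_mx W_T W_D.
    rewrite /Y !mul_mx_row opp_row_mx add_row_mx.
    by congr row_mx; rewrite addrAC subrr add0r.
  by rewrite mulmxA P0J mul0mx frob2_0.
split.
  exists P0, H, S_D; split; [exact: gP0 | exact: hS | move=> P' H' S' _ _].
  by rewrite obj0; apply: frob2_ge0.
move=> P Hh Sh [[PP PH rP] hSh hmin].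
have obj : jml_obj Y S_T P Hh Sh = 0.
  apply/eqP; rewrite eq_le (frob2_ge0 _) andbT -obj0; exact: hmin gP0 hS.
move/frob2_eq0: obj.
rewrite /Y mul_mx_row opp_row_mx add_row_mx mul_mx_row -row_mx0.
case/eq_row_mx => e1 e2.
have e1' : P *m Hh *m S_T = P *m H *m S_T + P *m J *m W_T.
  move: e1; rewrite mulmxBr mulmxDr !mulmxA => /eqP; rewrite subr_eq0 => /eqP.
  by move=> ->.
have hPHh : P *m Hh = P *m H + P *m J *m W_T *m G.
  rewrite -[P *m Hh]mulmx1 -hG mulmxA e1' mulmxDl -(mulmxA (P *m H) S_T G).
  by rewrite hG mulmx1.
set M := col_mx (S_D - Sh) (W_D - W_T *m G *m Sh).
have PKM : P *m (K *m M) = 0.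
  rewrite mul_row_col /M !mulmxBr mulmxDr !mulmxBr zmod4 -e2 mulmxBr mulmxDr.
  congr (_ - _).
  by rewrite [RHS]mulmxA hPHh mulmxDl !mulmxA.
have rM : (\rank M <= I)%N.
  have s := sylvester P (K *m M).
  rewrite PKM mxrank0 rP (rank_left_inv _ hL) addn0 in s.
  have hIB : (I <= B)%N by apply: leq_trans (leq_addl U I) hUI.
  by rewrite -(leq_add2l (B - I)) subnK.
have eSh : Sh = S_D.
  case: (eqVneq Sh S_D) => // hneq; exfalso; apply: hne.
  by exists Sh; split=> //; split=> //; apply/eqP.
subst Sh.
have rZ := not_eclipsed_rank hU hD hS hne.
have [Rz hRz] : exists Rz, (W_D - W_T *m G *m S_D) *m Rz = 1%:M.
  by apply/row_freeP; rewrite /row_free rZ.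
have PJ : P *m J = 0.
  move: PKM; rewrite /M subrr mul_row_col mulmx0 add0r mulmxA.
  by move=> h; rewrite -[P *m J]mulmx1 -hRz mulmxA h mul0mx.
have PP0 : P *m P0 = P by rewrite /P0 mulmxBr mulmx1 mulmxA PJ mul0mx subr0.
have P0P : P0 *m P = P.
  have := congr1 (@ctmx _ _ _) PP0; rewrite ctmx_mul PH.
  by rewrite /P0 ctmxB ctmx1 hJ3 -/P0.
have sub1 : (P <= P0)%MS by rewrite -PP0 submxMl.
have : (P == P0)%MS.
  by rewrite -(mxrank_leqif_eq sub1).2 rP; case: gP0 => _ _ ->.
case/andP => _ /submxP [Dm hDm].
have eP : P = P0 by rewrite -P0P {1}hDm -mulmxA PP hDm.
split=> //.
by rewrite hPHh PJ !mul0mx addr0.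
Qed.
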